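(* Consider the mining game with $N\ge 2$ miners, costs-per-hash $0<c_1\le\dots\le c_N$, reward $R>0$ and capacity parameter $\gamma\ge0$, let $h^*$ be its unique equilibrium hash rate profile, $n$ the number of active miners, and $\pi_i^*$ the equilibrium payoff of miner $i$. Then $(\pi_i^* )_{1\le i\le N}$ is a decreasing sequence with $\pi_i^*>0$ for $1\le i\le n$ and $\pi_i^*=0$ for $n<i\le N$. Moreover, the profit-per-hash of active miners, $(\pi_i^*/h_i^* )_{1\le i\le n}$, is a decreasing sequence.
   Context: Mining game: $N\ge2$ miners with costs-per-hash $0<c_1\le\dots\le c_N$; each miner $i$ chooses $h_i\ge0$, $H=\sum_j h_j$, and the payoff of miner $i$ is $\pi_i=\frac{h_i}{H}R-c_ih_i-\frac{\gamma}{2}h_i^2$ if $H>0$, and $\pi_i=0$ if $H=0$, where $R>0$ and $\gamma\ge 0$. An equilibrium hash rate profile is a pure-strategy Nash equilibrium $h^*\in[0,\infty)^N$; it exists and is unique, and $\pi_i^*$ denotes miner $i$'s payoff at $h^*$. Miner $i$ is active if $h_i^*>0$. A sequence $(x_i)$ is called decreasing if $x_i\ge x_{i+1}$ for all $i$. *)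

(* Defs.v *)
From mathcomp Require Import all_boot all_order all_algebra.
From mathcomp Require Import reals.
Set Implicit Arguments. Unset Strict Implicit. Unset Printing Implicit Defensive.
Import Order.TTheory GRing.Theory Num.Theory.
Local Open Scope ring_scope.

(* Mining game with N miners indexed by 'I_N (miner i of the paper is
   the ordinal i-1).  c = costs-per-hash, Rw = reward R, gamma = capacity. *)

Definition payoff (R : realType) (N : nat) (c : 'I_N -> R) (Rw gamma : R)
  (h : 'I_N -> R) (i : 'I_N) : R :=
  let H := \sum_(j < N) h j in
  if 0 < H then h i / H * Rw - c i * h i - gamma / 2 * h i ^+ 2 else 0.

Definition deviate (R : realType) (N : nat) (h : 'I_N -> R) (i : 'I_N) (x : R)
  : 'I_N -> R := fun j => if j == i then x else h j.

Definition is_equilibrium (R : realType) (N : nat) (c : 'I_N -> R) (Rw gamma : R)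
  (h : 'I_N -> R) : Prop :=
  (forall i, 0 <= h i) /\
  (forall i (x : R), 0 <= x ->
     payoff c Rw gamma (deviate h i x) i <= payoff c Rw gamma h i).

Definition num_active (R : realType) (N : nat) (h : 'I_N -> R) : nat :=
  #|[pred i : 'I_N | 0 < h i]|.

(* Main.v *)
Require Import Defs.
From mathcomp Require Import all_boot all_order all_algebra.
From mathcomp Require Import reals.
From mathcomp Require Import lra ring.
Import Order.TTheory GRing.Theory Num.Theory.
Set Implicit Arguments. Unset Strict Implicit.
Local Open Scope ring_scope.

Definition fpay (R : realFieldType) (S c Rw g x : R) :=
  x / (S + x) * Rw - c * x - g / 2 * x ^+ 2.

Lemma fpay_diff (R : realFieldType) (S c Rw g a t : R) : 0 < S + a -> 0 < S + a + t ->
  fpay S c Rw g (a + t) - fpay S c Rw g a =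
  t * ((Rw * S / (S+a)^+2 - c - g*a) - t * (Rw * S / ((S+a)^+2 * (S+a+t)) + g/2)).
Proof.
move=> h1 h2; rewrite /fpay; field.
by rewrite !lt0r_neq0.
Qed.

Lemma Mle (R : realFieldType) (S Rw P u : R) : 0 < S -> 0 < Rw -> 0 < P -> S <= u ->
  Rw * S / (P^+2 * u) <= Rw / P^+2.
Proof.
move=> S0 R0 P0 Su.
have u0 : 0 < u by apply: lt_le_trans Su.
rewrite ler_pdivrMr ?mulr_gt0 ?exprn_gt0 //.
rewrite mulrA divfK ?expf_neq0 ?gt_eqF //.
by rewrite ler_wpM2l // ltW.
Qed.

Lemma foc_up (R : realFieldType) (S c Rw g a : R) : 0 < S -> 0 <= a -> 0 < Rw -> 0 <= g ->
  (forall x, 0 <= x -> fpay S c Rw g x <= fpay S c Rw g a) ->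
  Rw * S / (S+a)^+2 - c - g*a <= 0.
Proof.
move=> S0 a0 R0 g0 opt; rewrite leNgt; apply/negP => D0.
set D := _ - _ - _ in D0.
have P0 : 0 < S + a by lra.
set B := Rw / (S+a)^+2 + g/2.
have B0 : 0 < B.
  have : 0 < Rw/(S+a)^+2 by rewrite divr_gt0 ?exprn_gt0.
  have : 0 <= g/2 by rewrite divr_ge0.
  rewrite /B; lra.
set t := D / (2*B).
have t0 : 0 < t by rewrite /t divr_gt0 // mulr_gt0.
have P1 : 0 < S + a + t by lra.
have := opt (a+t) (addr_ge0 a0 (ltW t0)).
have E := fpay_diff c Rw g P0 P1; rewrite -/D in E.
have M := @Mle R S Rw (S+a) (S+a+t) S0 R0 P0 ltac:(lra).
have tB : t * B = D/2 by rewrite /t; field; rewrite gt_eqF.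
have : t * (Rw * S / ((S+a)^+2 * (S+a+t)) + g/2) <= t * B.
  by rewrite ler_pM2l // /B; lra.
move=> tM.
have : 0 < t * (D - t * (Rw * S / ((S+a)^+2 * (S+a+t)) + g/2)).
  apply: mulr_gt0 => //; lra.
lra.
Qed.

Lemma foc_lo (R : realFieldType) (S c Rw g a : R) : 0 < S -> 0 < a -> 0 < Rw -> 0 <= g ->
  (forall x, 0 <= x -> fpay S c Rw g x <= fpay S c Rw g a) ->
  0 <= Rw * S / (S+a)^+2 - c - g*a.
Proof.
move=> S0 a0 R0 g0 opt; rewrite leNgt; apply/negP => D0.
set D := _ - _ - _ in D0.
have P0 : 0 < S + a by lra.
set B := Rw / (S+a)^+2 + g/2.
have B0 : 0 < B.
  have : 0 < Rw/(S+a)^+2 by rewrite divr_gt0 ?exprn_gt0.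
  have : 0 <= g/2 by rewrite divr_ge0.
  rewrite /B; lra.
set t := Num.min (a/2) (- D / (2*B)).
have t1 : t <= a/2 by rewrite /t ge_min lexx.
have t2 : t <= - D / (2*B) by rewrite /t ge_min lexx orbT.
have t0 : 0 < t.
  rewrite /t lt_min; apply/andP; split; first lra.
  by rewrite divr_gt0 ?mulr_gt0 // oppr_gt0.
have P1 : 0 < S + a + - t by lra.
have := opt (a + - t) ltac:(lra).
have E := fpay_diff c Rw g P0 P1; rewrite -/D in E.
have M := @Mle R S Rw (S+a) (S+a+ -t) S0 R0 P0 ltac:(lra).
have tB : t * B <= - D/2.
  have := ler_wpM2r (ltW B0) t2.
  have -> : - D / (2*B) * B = - D / 2 by field; rewrite gt_eqF.
  done.
have : t * (Rw * S / ((S+a)^+2 * (S+a+ - t)) + g/2) <= t * B.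
  by rewrite ler_pM2l // /B; lra.
move=> tM.
have : 0 < t * (- (D - (- t) * (Rw * S / ((S+a)^+2 * (S+a+ - t)) + g/2))).
  apply: mulr_gt0 => //; lra.
lra.
Qed.

Lemma sum_dev (R : realType) N (h : 'I_N -> R) i x :
  \sum_(j < N) deviate h i x j = \sum_(j < N) h j - h i + x.
Proof.
rewrite (bigD1 i) //= [in RHS](bigD1 i) //= /deviate eqxx.
rewrite (eq_bigr h); last by move=> j /negbTE ->.
lra.
Qed.

Lemma pay_dev (R : realType) N (c : 'I_N -> R) Rw g h i x :
  payoff c Rw g (deviate h i x) i =
  if 0 < \sum_(j < N) h j - h i + x then fpay (\sum_(j < N) h j - h i) (c i) Rw g x else 0.
Proof.
by rewrite /payoff sum_dev /deviate eqxx /fpay.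
Qed.

Lemma payoffE (R : realType) N (c : 'I_N -> R) Rw g h i :
  0 < \sum_(j < N) h j ->
  payoff c Rw g h i = h i / (\sum_(j < N) h j) * Rw - c i * h i - g / 2 * h i ^+ 2.
Proof. by rewrite /payoff => ->. Qed.

Lemma sqdiv (R : realFieldType) (K x : R) : K * x ^+ 2 / x = K * x.
Proof.
have [->|x0] := eqVneq x 0; first by rewrite expr0n /= !(mulr0, mul0r).
by field.
Qed.

Theorem proposition4p3 (R : realType) (N : nat) (c : 'I_N -> R) (Rw gamma : R)
  (h : 'I_N -> R) :
  (2 <= N)%N ->
  (forall i, 0 < c i) ->
  (forall i j : 'I_N, (i <= j)%N -> c i <= c j) ->
  0 < Rw -> 0 <= gamma ->
  is_equilibrium c Rw gamma h ->
  (forall i j : 'I_N, (i <= j)%N -> payoff c Rw gamma h j <= payoff c Rw gamma h i)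
  /\ (forall i : 'I_N, (i < num_active h)%N -> 0 < payoff c Rw gamma h i)
  /\ (forall i : 'I_N, (num_active h <= i)%N -> payoff c Rw gamma h i = 0)
  /\ (forall i j : 'I_N, (i <= j)%N -> (j < num_active h)%N ->
        payoff c Rw gamma h j / h j <= payoff c Rw gamma h i / h i).
Proof.
move=> N2 c0 cmono R0 g0 [hge0 opt].
set H := \sum_(j < N) h j.
have H0 : 0 < H.
  rewrite ltNge; apply/negP => Hle.
  have Heq : H = 0 by apply/eqP; rewrite eq_le Hle sumr_ge0.
  have hz := psumr_eq0P (fun j _ => hge0 j) Heq.
  have i0 : 'I_N by exists 0%N; apply: leq_trans N2.
  set k := c i0 + gamma + Rw.
  have k0 : 0 < k by have := c0 i0; rewrite /k; lra.
  set x := Rw / (2 * k).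
  have x0 : 0 < x by rewrite divr_gt0 // mulr_gt0.
  have xk : x * k = Rw / 2 by rewrite /x; field; rewrite gt_eqF.
  have x1 : x <= 1/2.
    have : x * k <= 1/2 * k by rewrite xk /k; have := c0 i0; lra.
    by rewrite ler_pM2r.
  have gx : gamma * x ^+ 2 <= gamma * x / 2.
    have gx0 : 0 <= gamma * x by rewrite mulr_ge0 // ltW.
    have := ler_wpM2l gx0 x1; rewrite expr2 mulrA; lra.
  have := opt i0 x (ltW x0).
  rewrite pay_dev -/H Heq hz // subr0 add0r x0 /fpay add0r divff ?gt_eqF // mul1r.
  rewrite /payoff -/H Heq ltxx.
  move: xk; rewrite /k; have := c0 i0; have : 0 <= gamma * x by rewrite mulr_ge0 // ltW.
  have : 0 <= Rw * x by rewrite mulr_ge0 // ltW.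
  lra.
have Sge : forall i, h i <= H.
  move=> i; rewrite /H (bigD1 i) //= lerDl sumr_ge0 //.
have S0 : forall i, 0 < H - h i.
  move=> i; have [hi0|hi0] := boolP (0 < h i); last first.
    have -> : h i = 0 by apply/eqP; rewrite eq_le hge0 andbT leNgt.
    by rewrite subr0.
  rewrite lt_neqAle subr_ge0 Sge andbT; apply/negP => /eqP E.
  have HE : H = h i by lra.
  have hh : 0 < h i / 2 by rewrite divr_gt0.
  have := opt i (h i / 2) (ltW hh).
  rewrite pay_dev -/H -E add0r hh /fpay add0r divff ?gt_eqF // mul1r.
  rewrite payoffE // -/H HE divff ?gt_eqF // mul1r.
  have : 0 < c i * h i by rewrite mulr_gt0.
  have : 0 <= gamma * h i ^+ 2 by rewrite mulr_ge0 // exprn_ge0 // ltW.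
  have -> : (h i / 2) ^+ 2 = h i ^+ 2 / 4 by field.
  lra.
have optf : forall i x, 0 <= x ->
    fpay (H - h i) (c i) Rw gamma x <= fpay (H - h i) (c i) Rw gamma (h i).
  move=> i x x0; have := opt i x x0.
  have Sx : 0 < H - h i + x by have := S0 i; lra.
  by rewrite pay_dev -/H Sx payoffE // -/H /fpay subrK.
set K2 := Rw / H ^+ 2 + gamma.
have RHE : forall i, Rw * (H - h i) / H ^+ 2 = Rw / H - h i * (Rw / H ^+ 2).
  by move=> i; field; rewrite gt_eqF.
have focL : forall i, Rw / H - h i * K2 <= c i.
  move=> i; have := foc_up (S0 i) (hge0 i) R0 g0 (optf i).
  rewrite subrK RHE /K2; lra.
have focU : forall i, 0 < h i -> c i <= Rw / H - h i * K2.
  move=> i hi; have := foc_lo (S0 i) hi R0 g0 (optf i).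
  rewrite subrK RHE /K2; lra.
set K := Rw / H ^+ 2 + gamma / 2.
have RH0 : 0 < Rw / H ^+ 2 by rewrite divr_gt0 // exprn_gt0.
have K0 : 0 < K.
  rewrite /K; have : 0 <= gamma / 2 by rewrite divr_ge0.
  lra.
have K20 : 0 < K2 by rewrite /K2; lra.
have payK : forall i, payoff c Rw gamma h i = K * h i ^+ 2.
  move=> i; rewrite payoffE // -/H; have [hi|hi] := boolP (0 < h i).
    have ce : c i = Rw / H - h i * K2 by apply/eqP; rewrite eq_le focU // focL.
    by rewrite ce /K /K2; field; rewrite gt_eqF.
  have -> : h i = 0 by apply/eqP; rewrite eq_le hge0 andbT leNgt.
  by rewrite expr2 !(mul0r, mulr0) !subr0.
have hmono : forall i j : 'I_N, (i <= j)%N -> h j <= h i.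
  move=> i j ij; have [hj|hj] := boolP (0 < h j); last first.
    by apply: le_trans (hge0 i); rewrite leNgt.
  have := focL i; have := focU j hj; have := cmono i j ij.
  move=> *; rewrite -(ler_pM2r K20); lra.
split.
  move=> i j ij; rewrite !payK ler_pM2l // !expr2.
  by apply: ler_pM => //; apply: hmono.
split.
  move=> i ni; rewrite payK mulr_gt0 // exprn_gt0 //.
  rewrite ltNge; apply/negP => hi.
  have le : (i <= N)%N := ltnW (ltn_ord i).
  have : (num_active h <= i)%N.
    rewrite /num_active.
    apply: leq_trans (subset_leq_card (B := [set widen_ord le k | k : 'I_i]) _) _.
      apply/subsetP => k; rewrite inE => hk; apply/imsetP.
      have ki : (k < i)%N.
        rewrite ltnNge; apply/negP => ik; have := hmono _ _ ik; lra.
      by exists (Ordinal ki) => //; apply: val_inj.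
    by apply: leq_trans (leq_imset_card _ _) _; rewrite card_ord.
  by rewrite leqNgt ni.
split.
  move=> i ni; rewrite payK.
  have : h i <= 0.
    rewrite leNgt; apply/negP => hi.
    have le : (i.+1 <= N)%N := ltn_ord i.
    have : (i.+1 <= num_active h)%N.
      rewrite /num_active.
      have := subset_leq_card (A := [set widen_ord le k | k : 'I_i.+1])
                (B := [pred k | 0 < h k]) _.
      rewrite card_imset ?card_ord; last by move=> a b /(congr1 val) /= ab; apply: val_inj.
      apply; apply/subsetP => k /imsetP [k' _ ->]; rewrite inE /=.
      by apply: lt_le_trans hi (hmono _ _ _); rewrite /= -ltnS.
    by move=> H1; move: ni; rewrite leqNgt H1.
  move=> hi; have -> : h i = 0 by apply/eqP; rewrite eq_le hge0 andbT.
  by rewrite expr2 !mulr0.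
move=> i j ij _; rewrite !payK !sqdiv ler_pM2l //; exact: hmono.
Qed.
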